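(* Let $X$ be a compact Hausdorff space, $\mathcal C=C(X)$ the real continuous functions on $X$ with the supremum norm, $\alpha\colon X\to X$ continuous, $\delta f=f\circ\alpha$, and $A\colon\mathcal C\to\mathcal C$ a transfer operator for $(\mathcal C,\delta)$. Let $\lambda(\varphi)=\lim_{n\to\infty}\frac1n\ln\|A_\varphi^n\mathbf 1\|$ where $A_\varphi f=A(e^\varphi f)$. Then for every linear functional $\mu$ on $\mathcal C$ that does not belong to $M_\delta(\mathcal C)$, \[ \inf_{\varphi\in\mathcal C}\bigl(\lambda(\varphi)-\mu[\varphi]\bigr)=-\infty. \]
   Context: A transfer operator for $(\mathcal C,\delta)$ is a positive linear operator $A\colon\mathcal C\to\mathcal C$ with $A((\delta f)g)=f\,Ag$ for all $f,g\in\mathcal C$. $\mathbf 1$ is the constant function $1$. $M_\delta(\mathcal C)$ is the set of positive linear functionals $\mu$ on $\mathcal C$ with $\mu[\mathbf 1]=1$ and $\mu[\delta f]=\mu[f]$ for all $f\in\mathcal C$. *)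

(* Defs.v *)
From HB Require Import structures.
From mathcomp Require Import all_boot all_order all_algebra.
From mathcomp Require Import all_classical all_reals all_analysis.
Set Implicit Arguments. Unset Strict Implicit. Unset Printing Implicit Defensive.
Import Order.TTheory GRing.Theory Num.Theory.
Import numFieldNormedType.Exports.
Local Open Scope classical_set_scope.
Local Open Scope ring_scope.

(* C(X) is represented inside X -> R by the predicate [continuous]. *)

Definition sup_norm (R : realType) (X : topologicalType) (f : X -> R) : R :=
  sup (range (fun x => `|f x|)).

Definition lin_on_C (R : realType) (X : topologicalType) (A : (X -> R) -> (X -> R)) :=
  (forall f : X -> R, continuous f -> continuous (A f)) /\
  (forall (a : R) (f g : X -> R), continuous f -> continuous g ->
      A (fun x => a * f x + g x) = (fun x => a * A f x + A g x)).

Definition transfer_operator (R : realType) (X : topologicalType)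
    (alpha : X -> X) (A : (X -> R) -> (X -> R)) :=
  lin_on_C A /\
  (forall f : X -> R, continuous f -> (forall x, 0 <= f x) -> forall x, 0 <= A f x) /\
  (forall f g : X -> R, continuous f -> continuous g ->
      A (fun x => f (alpha x) * g x) = (fun x => f x * A g x)).

Definition lin_functional (R : realType) (X : topologicalType) (mu : (X -> R) -> R) :=
  forall (a : R) (f g : X -> R), continuous f -> continuous g ->
    mu (fun x => a * f x + g x) = a * mu f + mu g.

Definition in_M_delta (R : realType) (X : topologicalType) (alpha : X -> X)
    (mu : (X -> R) -> R) :=
  [/\ lin_functional mu,
      (forall f : X -> R, continuous f -> (forall x, 0 <= f x) -> 0 <= mu f),
      mu (fun _ => 1) = 1 &
      (forall f : X -> R, continuous f -> mu (fun x => f (alpha x)) = mu f)].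

Definition Aphi_iter (R : realType) (X : topologicalType) (A : (X -> R) -> (X -> R))
    (phi : X -> R) (n : nat) : X -> R :=
  iter n (fun f => A (fun x => expR (phi x) * f x)) (fun _ => 1).

Definition lam_seq (R : realType) (X : topologicalType) (A : (X -> R) -> (X -> R))
    (phi : X -> R) (n : nat) : \bar R :=
  let N := sup_norm (Aphi_iter A phi n) in
  if N == 0 then -oo%E else (ln N / n%:R)%:E.

Definition lam (R : realType) (X : topologicalType) (A : (X -> R) -> (X -> R))
    (phi : X -> R) : \bar R :=
  lim (lam_seq A phi n @[n --> \oo]).

(* Main.v *)
Require Import Defs.
From HB Require Import structures.
From mathcomp Require Import all_boot all_order all_algebra.
From mathcomp Require Import all_classical all_reals all_analysis.
From mathcomp Require Import ring lra.
Import Order.TTheory GRing.Theory Num.Theory.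
Import numFieldNormedType.Exports.
Local Open Scope classical_set_scope.
Local Open Scope ring_scope.
Lemma boundC (R : realType) (f : nat -> R) m :
  exists C, 0 <= C /\ forall r, (r < m)%N -> f r <= C.
Proof.
elim: m => [|m [C [C0 HC]]]; first by exists 0.
exists (Num.max C (f m)); split; first by rewrite le_max C0.
move=> r; rewrite ltnS leq_eqVlt => /orP[/eqP->|rm]; first by rewrite le_max lexx orbT.
by rewrite le_max HC.
Qed.

Lemma fek_step (R : realType) (u : nat -> R) (m : nat) (e : R) :
  (forall n k, u (n + k)%N <= u n + u k) -> 0 < e ->
  exists N, forall n, (N <= n)%N ->
    u n.+1 / n.+1%:R <= u m.+1 / m.+1%:R + e.
Proof.
move=> usub e0.
set M := m.+1.
have Mpos : 0 < M%:R :> R by rewrite ltr0n.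
have iterq q r : u (q * M + r)%N <= u M *+ q + u r.
  elim: q => [|q IH]; first by rewrite mul0n add0n mulr0n add0r.
  rewrite mulSn -addnA (le_trans (usub _ _)) // mulrS -addrA lerD2l //.
have [C [C0 HC]] := boundC _ u M.
set D := `|u M| + C.
have D0 : 0 <= D by rewrite addr_ge0.
exists (Num.trunc (D / e)).+1 => n Nn.
set k := n.+1.
have kpos : 0 < k%:R :> R by rewrite ltr0n.
have kE := divn_eq k M.
set q := (k %/ M)%N in kE *.
set r := (k %% M)%N in kE *.
have rM : (r < M)%N by rewrite ltn_pmod.
have h0 : u k <= q%:R * u M + C.
  by rewrite {1}kE mulr_natl (le_trans (iterq _ _)) // lerD2l HC.
have kR : k%:R = q%:R * M%:R + r%:R :> R by rewrite {1}kE natrD natrM.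
have rle : r%:R / M%:R <= 1 :> R.
  by rewrite ler_pdivrMr // mul1r ler_nat ltnW.
have rge : 0 <= r%:R / M%:R :> R by rewrite divr_ge0.
have e1 : u M / M%:R * k%:R = q%:R * u M + u M * (r%:R / M%:R).
  by rewrite kR; field; rewrite gt_eqF.
have nrm1 := ler_norm (u M).
have nrm2 : - `|u M| <= u M by rewrite lerNl -normrN ler_norm.
have h1 : - `|u M| <= u M * (r%:R / M%:R) by nra.
have h2 : D <= e * k%:R.
  rewrite mulrC -ler_pdivrMr //.
  apply: ltW; apply: (lt_le_trans (truncnS_gt _)).
  by rewrite ler_nat /k (leq_trans Nn).
rewrite ler_pdivrMr // mulrDl.
rewrite /D in h2; lra.
Qed.

Lemma fekete (R : realType) (a : nat -> R) :
  (forall n, 0 <= a n) -> (forall n m, a (n + m)%N <= a n * a m) ->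
  cvg ((if a n == 0 then -oo%E else (ln (a n) / n%:R)%:E) @[n --> \oo]).
Proof.
move=> a0 asub.
case: (pselect (exists k, a k = 0)) => [[k ak0]|nz].
  apply/cvg_ex; exists -oo%E; apply: cvg_near_cst.
  exists k => // n /= kn.
  have : a n <= 0 by rewrite -(subnKC kn) (le_trans (asub _ _)) // ak0 mul0r.
  move=> h; have -> : a n = 0 by apply/eqP; rewrite eq_le h a0.
  by rewrite eqxx.
have apos n : 0 < a n.
  rewrite lt0r a0 andbT; apply/eqP => h; apply: nz; by exists n.
set u := fun n => ln (a n).
have usub n m : u (n + m)%N <= u n + u m.
  rewrite /u -lnM ?posrE // ler_ln ?posrE ?mulr_gt0 //.
have -> : (fun n => if a n == 0 then -oo%E else (ln (a n) / n%:R)%:E) =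
          (fun n => (u n / n%:R)%:E).
  by apply/funext => n; rewrite gt_eqF.
apply/cvg_ex.
set t := fun n => (u n.+1 / n.+1%:R)%:E.
exists (ereal_inf (range t)).
rewrite -cvg_shiftS.
apply: limn_esup_le_cvg; last by move=> n; apply: ereal_inf_lbound; exists n.
apply: le_ereal_inf_tmp => _ [m _ <-].
apply/lee_addgt0Pr => e e0.
have [N HN] := fek_step _ _ m _ usub e0.
rewrite limn_esup_lim.
have -> : limn (esups [sequence (u n.+1 / n.+1%:R)%:E]_n) = ereal_inf (range (esups t)).
  by apply: cvg_lim => //; exact: cvg_esups_inf.
have H1 : (ereal_inf (range (esups t)) <= esups t N)%E.
  by apply: ereal_inf_lbound; exists N.
apply: le_trans H1 _.
apply: ub_ereal_sup => _ [n /= Nn <-].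
by rewrite /t lee_fin HN.
Qed.

Lemma cont_lin {R : realType} {X : topologicalType} (a : R) (f g : X -> R) :
  continuous f -> continuous g -> continuous (fun x => a * f x + g x).
Proof.
move=> cf cg x; apply: (@continuousD _ _ _ (fun x => a * f x) g).
  apply: (@continuousM _ _ (fun=> a) f); [exact: cst_continuous|exact: cf].
exact: cg.
Qed.

Lemma cont_mul {R : realType} {X : topologicalType} (f g : X -> R) :
  continuous f -> continuous g -> continuous (fun x => f x * g x).
Proof. by move=> cf cg x; apply: (@continuousM _ _ f g); [exact: cf|exact: cg]. Qed.

Lemma cont_exp {R : realType} {X : topologicalType} (f : X -> R) :
  continuous f -> continuous (fun x => expR (f x)).
Proof.
move=> cf x; apply: (@continuous_comp _ _ _ f expR); first exact: cf.
exact: continuous_expR.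
Qed.

Lemma cont_cst {R : realType} {X : topologicalType} (c : R) :
  continuous (fun _ : X => c).
Proof. by move=> x; apply: cst_continuous. Qed.

Definition posop {R : realType} {X : topologicalType} (B : (X -> R) -> (X -> R)) :=
 [/\ forall f : X -> R, continuous f -> continuous (B f),
     forall (a : R) (f g : X -> R), continuous f -> continuous g ->
       B (fun x => a * f x + g x) = (fun x => a * B f x + B g x) &
     forall f : X -> R, continuous f -> (forall x, 0 <= f x) -> forall x, 0 <= B f x].

Lemma posop0 {R : realType} {X : topologicalType} (B : (X -> R) -> (X -> R)) :
  posop B -> B (fun _ => 0) = (fun _ => 0).
Proof.
case=> _ lin _.
have := lin (-1) (fun _ => 0) (fun _ => 0) (cont_cst 0) (cont_cst 0).
have -> : (fun _ : X => -1 * 0 + 0 : R) = (fun _ => 0).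
  by apply/funext => x; rewrite mulr0 addr0.
move=> H; apply/funext => x; rewrite H /=.
by rewrite mulN1r addNr.
Qed.

Lemma posopZ {R : realType} {X : topologicalType} (B : (X -> R) -> (X -> R)) (a : R) (f : X -> R) :
  posop B -> continuous f -> B (fun x => a * f x) = (fun x => a * B f x).
Proof.
move=> hB cf; have B0 := posop0 _ hB; case: hB => _ lin _.
have := lin a f (fun _ => 0) cf (cont_cst 0).
have -> : (fun x : X => a * f x + 0 : R) = (fun x => a * f x).
  by apply/funext => x; rewrite addr0.
by move=> ->; rewrite B0; apply/funext => x; rewrite addr0.
Qed.

Lemma posop_mono {R : realType} {X : topologicalType} (B : (X -> R) -> (X -> R)) (f g : X -> R) :
  posop B -> continuous f -> continuous g -> (forall x, f x <= g x) ->
  forall x, B f x <= B g x.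
Proof.
move=> [cB lin pos] cf cg fg x.
set h := fun x => -1 * f x + g x.
have ch : continuous h by apply: cont_lin.
have : B (fun x => 1 * h x + f x) = (fun x => 1 * B h x + B f x) by apply: lin.
have -> : (fun x => 1 * h x + f x) = g.
  by apply/funext => y; rewrite /h mul1r mulN1r addrC addrA addrN add0r.
move=> ->; rewrite mul1r lerDr; apply: pos => // y.
by rewrite /h mulN1r addrC subr_ge0.
Qed.

Lemma posop_iter {R : realType} {X : topologicalType} (B : (X -> R) -> (X -> R)) n :
  posop B -> posop (iter n B).
Proof.
move=> hB; case: (hB) => cB lin pos.
have cI : forall f, continuous f -> continuous (iter n B f).
  by elim: n => [//|n IH] f cf /=; apply: cB; apply: IH.
split => //.
  elim: n cI => [//|n IH] cI a f g cf cg /=.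
  have cI' : forall f, continuous f -> continuous (iter n B f).
    by elim: (n) => [//|k IHk] h ch /=; apply: cB; apply: IHk.
  rewrite IH //; apply: lin; exact: cI'.
elim: n cI => [//|n IH] cI f cf f0 /=.
have cI' : forall f, continuous f -> continuous (iter n B f).
  by elim: (n) => [//|k IHk] h ch /=; apply: cB; apply: IHk.
apply: pos; first exact: cI'.
exact: IH.
Qed.

Lemma transfer_posop {R : realType} {X : topologicalType} (alpha : X -> X)
  (A : (X -> R) -> (X -> R)) : transfer_operator alpha A -> posop A.
Proof. by case=> [[cA lin] [pos _]]; split. Qed.

Lemma transfer_posop_phi {R : realType} {X : topologicalType} (alpha : X -> X)
  (A : (X -> R) -> (X -> R)) (phi : X -> R) : transfer_operator alpha A ->
  continuous phi -> posop (fun f => A (fun x => expR (phi x) * f x)).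
Proof.
case=> [[cA lin] [pos _]] cphi; have ce := cont_exp _ cphi; split.
- by move=> f cf; apply: cA; apply: cont_mul.
- move=> a f g cf cg.
  have -> : (fun x => expR (phi x) * (a * f x + g x)) =
            (fun x => a * (expR (phi x) * f x) + expR (phi x) * g x).
    by apply/funext => x; rewrite mulrDr mulrCA.
  by apply: lin; apply: cont_mul.
- move=> f cf f0 x; apply: pos; first exact: cont_mul.
  by move=> y; rewrite mulr_ge0 // expR_ge0.
Qed.
Lemma compact_bnd {R : realType} {X : topologicalType} (f : X -> R) :
  compact [set: X] -> continuous f -> exists M, 0 <= M /\ forall x, `|f x| <= M.
Proof.
move=> cX cf.
have cf' : {within [set: X], continuous f} by apply: continuous_subspaceT.
have := compact_bounded (continuous_compact cf' cX).
case=> M [Mr HM].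
exists (`|M| + 1); split; first by rewrite addr_ge0.
move=> x; apply: (HM (`|M| + 1)); last by exists x.
by rewrite (le_lt_trans (ler_norm _)) // ltrDl.
Qed.

Lemma sup_norm_le {R : realType} {X : topologicalType} (f : X -> R) (M : R) :
  0 <= M -> (forall x, `|f x| <= M) -> sup_norm f <= M.
Proof.
move=> M0 fM; rewrite /sup_norm.
case: (pselect (exists x : X, True)) => [[x0 _]|nx].
  apply: ge_sup; first by exists `|f x0|, x0.
  by move=> _ [x _ <-].
have -> : range (fun x => `|f x|) = set0.
  by apply/seteqP; split => // y [x _ _]; apply: nx; exists x.
by rewrite sup0.
Qed.

Lemma le_sup_norm {R : realType} {X : topologicalType} (f : X -> R) (M : R) x :
  (forall y, `|f y| <= M) -> `|f x| <= sup_norm f.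
Proof.
move=> fM; apply: ub_le_sup; last by exists x.
by exists M => _ [y _ <-].
Qed.

Lemma sup_norm_ge0 {R : realType} {X : topologicalType} (f : X -> R) (M : R) :
  (forall y, `|f y| <= M) -> 0 <= sup_norm f.
Proof.
move=> fM; rewrite /sup_norm.
case: (pselect (exists x : X, True)) => [[x0 _]|nx].
  exact: le_trans (normr_ge0 (f x0)) (le_sup_norm _ _ x0 fM).
have -> : range (fun x => `|f x|) = set0.
  by apply/seteqP; split => // y [x _ _]; apply: nx; exists x.
by rewrite sup0.
Qed.

Lemma iter_bound {R : realType} {X : topologicalType} (B : (X -> R) -> (X -> R)) (K : R) :
  posop B -> 0 <= K ->
  (forall (h : X -> R) (M : R), continuous h -> (forall x, 0 <= h x <= M) -> forall x, B h x <= M * K) ->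
  forall n (h : X -> R) (M : R), continuous h -> (forall x, 0 <= h x <= M) ->
  forall x, 0 <= iter n B h x <= M * K ^+ n.
Proof.
move=> hB K0 HB n; elim: n => [|n IH] h M ch hM x.
  by rewrite expr0 mulr1 /=; apply: hM.
have [cI _ pI] := posop_iter _ n hB.
rewrite /=; apply/andP; split.
  case: (hB) => _ _ pB; apply: pB; first exact: cI.
  by move=> y; case/andP: (IH h M ch hM y).
have -> : M * K ^+ n.+1 = (M * K ^+ n) * K by rewrite exprS; ring.
apply: HB; first exact: cI.
exact: IH.
Qed.

Lemma Bphi_step {R : realType} {X : topologicalType} (alpha : X -> X)
  (A : (X -> R) -> (X -> R)) (phi : X -> R) (m K1 : R) :
  transfer_operator alpha A -> continuous phi ->
  (forall x, phi x <= m) -> (forall x, A (fun _ => 1) x <= K1) ->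
  forall (h : X -> R) (M : R), continuous h -> (forall x, 0 <= h x <= M) ->
  forall x, A (fun y => expR (phi y) * h y) x <= M * (expR m * K1).
Proof.
move=> hA cphi phim AK h M ch hM x.
have hAp := transfer_posop _ _ hA.
set c := expR m * M.
have c0 : 0 <= c.
  by rewrite /c mulr_ge0 ?expR_ge0 //; case/andP: (hM x) => h0 hm; apply: le_trans hm.
have step1 : A (fun y => expR (phi y) * h y) x <= A (fun _ => c) x.
  apply: (posop_mono _ _ _ hAp); first exact: cont_mul (cont_exp _ cphi) ch.
    exact: cont_cst.
  move=> y; case/andP: (hM y) => h0 hm.
  by rewrite /c ler_pM ?expR_ge0 // ler_expR.
have H := posopZ _ c (fun _ : X => 1) hAp (cont_cst 1).
have E : (fun _ : X => c) = (fun x => c * 1) by apply/funext => y; rewrite mulr1.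
rewrite E H /= in step1.
apply: (le_trans step1).
have -> : M * (expR m * K1) = c * K1 by rewrite /c; ring.
by rewrite ler_wpM2l.
Qed.

Lemma phi_bounds {R : realType} {X : topologicalType} (alpha : X -> X)
  (A : (X -> R) -> (X -> R)) (phi : X -> R) :
  compact [set: X] -> transfer_operator alpha A -> continuous phi ->
  exists Q, 0 <= Q /\ forall n x, 0 <= Aphi_iter A phi n x <= Q ^+ n.
Proof.
move=> cX hA cphi.
have [m [m0 Hm]] := compact_bnd _ cX cphi.
have hAp := transfer_posop _ _ hA.
have [cA _ _] := hAp.
have [K1 [K10 HK1]] := compact_bnd _ cX (cA _ (cont_cst 1)).
have hBp := transfer_posop_phi _ A phi hA cphi.
have K0 : 0 <= expR m * K1 by rewrite mulr_ge0 ?expR_ge0.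
have step := Bphi_step alpha A phi m K1 hA cphi
  (fun x => le_trans (ler_norm _) (Hm x)) (fun x => le_trans (ler_norm _) (HK1 x)).
have := iter_bound _ _ hBp K0 step.
move=> bnd; exists (expR m * K1); split => // n x.
have h1 : forall y : X, 0 <= (fun _ : X => 1 : R) y <= 1.
  by move=> y; rewrite /= ler01 lexx.
by have := bnd n (fun _ => 1) 1 (cont_cst 1) h1 x; rewrite mul1r.
Qed.

Lemma lam_cvg {R : realType} {X : topologicalType} (alpha : X -> X)
  (A : (X -> R) -> (X -> R)) (phi : X -> R) :
  compact [set: X] -> transfer_operator alpha A -> continuous phi ->
  cvg (lam_seq A phi n @[n --> \oo]).
Proof.
move=> cX hA cphi.
have [Q [Q0 HQ]] := phi_bounds alpha A phi cX hA cphi.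
have hBp := transfer_posop_phi _ A phi hA cphi.
set a := fun n => sup_norm (Aphi_iter A phi n).
have nb n : forall y, `|Aphi_iter A phi n y| <= Q ^+ n.
  by move=> y; case/andP: (HQ n y) => h0 h1; rewrite ger0_norm.
have a0 n : 0 <= a n by apply: sup_norm_ge0 (nb n).
have ub n y : Aphi_iter A phi n y <= a n.
  case/andP: (HQ n y) => h0 _; rewrite -(ger0_norm h0); exact: le_sup_norm (nb n).
have asub n k : a (n + k)%N <= a n * a k.
  rewrite /a; apply: sup_norm_le; first exact: mulr_ge0 (a0 n) (a0 k).
  move=> x.
  have hBn := posop_iter _ n hBp.
  have [cI _ pI] := hBn.
  have hBk := posop_iter _ k hBp.
  have cg : continuous (Aphi_iter A phi k).
    by case: hBk => c _ _; apply: c; exact: cont_cst.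
  have g0 : forall y, 0 <= Aphi_iter A phi k y by move=> y; case/andP: (HQ k y).
  rewrite /Aphi_iter iterD -/(Aphi_iter A phi k).
  rewrite ger0_norm; last by apply: pI.
  have m1 := posop_mono _ _ _ hBn cg (cont_cst (a k)) (ub k) x.
  apply: (le_trans m1).
  have Z := posopZ _ (a k) (fun _ : X => 1) hBn (cont_cst 1).
  have E : (fun _ : X => a k) = (fun x => a k * 1) by apply/funext => y; rewrite mulr1.
  rewrite E Z /= mulrC ler_wpM2r //.
  exact: ub n x.
have := fekete _ a a0 asub.
by rewrite /lam_seq /a.
Qed.

Lemma lam_le {R : realType} {X : topologicalType} (alpha : X -> X)
  (A : (X -> R) -> (X -> R)) (phi : X -> R) (E Q : R) :
  compact [set: X] -> transfer_operator alpha A -> continuous phi ->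
  1 <= E -> 0 < Q -> (forall n x, Aphi_iter A phi n x <= E * Q ^+ n) ->
  (lam A phi <= (1 + ln Q)%:E)%E.
Proof.
move=> cX hA cphi E1 Q0 HE.
have [Q' [_ HQ']] := phi_bounds alpha A phi cX hA cphi.
have E0 : 0 < E by apply: lt_le_trans E1.
rewrite /lam; apply: lime_le; first exact: lam_cvg cX hA cphi.
exists (Num.trunc (ln E)).+1 => // n /= Nn.
rewrite /lam_seq /=.
case: ifPn => [_|aN0]; first exact: leNye.
rewrite lee_fin.
have n0 : (0 < n)%N by apply: leq_trans Nn.
have npos : 0 < n%:R :> R by rewrite ltr0n.
have nb : forall y, `|Aphi_iter A phi n y| <= E * Q ^+ n.
  by move=> y; case/andP: (HQ' n y) => h0 _; rewrite ger0_norm // HE.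
have EQ0 : 0 < E * Q ^+ n by rewrite mulr_gt0 // exprn_gt0.
have an_le := sup_norm_le _ _ (ltW EQ0) nb.
have apos : 0 < sup_norm (Aphi_iter A phi n).
  by rewrite lt0r aN0 /=; apply: sup_norm_ge0 nb.
have hl : ln (sup_norm (Aphi_iter A phi n)) <= ln (E * Q ^+ n).
  by rewrite ler_ln ?posrE.
rewrite lnM ?posrE ?exprn_gt0 // lnXn // -mulr_natr in hl.
have hE : ln E <= n%:R.
  apply: ltW; apply: (lt_le_trans (truncnS_gt _)).
  by rewrite ler_nat.
rewrite ler_pdivrMr // mulrDl mul1r.
lra.
Qed.

Lemma mu0 {R : realType} {X : topologicalType} (mu : (X -> R) -> R) :
  lin_functional mu -> mu (fun _ => 0) = 0.
Proof.
move=> hmu; have := hmu (-1) (fun _ => 0) (fun _ => 0) (cont_cst 0) (cont_cst 0).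
have -> : (fun _ : X => -1 * 0 + 0 : R) = (fun _ => 0).
  by apply/funext => x; rewrite mulr0 addr0.
by move=> H; have : mu (fun _ => 0) * 2 = 0 by [rewrite {1}H; ring]; move/eqP; rewrite mulf_eq0 pnatr_eq0 orbF => /eqP.
Qed.

Lemma muZ {R : realType} {X : topologicalType} (mu : (X -> R) -> R) (a : R) (f : X -> R) :
  lin_functional mu -> continuous f -> mu (fun x => a * f x) = a * mu f.
Proof.
move=> hmu cf; have := hmu a f (fun _ => 0) cf (cont_cst 0).
have -> : (fun x : X => a * f x + 0 : R) = (fun x => a * f x).
  by apply/funext => x; rewrite addr0.
by rewrite (mu0 _ hmu) addr0.
Qed.

Lemma A_step {R : realType} {X : topologicalType} (B : (X -> R) -> (X -> R)) (K : R) :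
  posop B -> (forall x, B (fun _ => 1) x <= K) ->
  forall (h : X -> R) (M : R), continuous h -> (forall x, 0 <= h x <= M) ->
  forall x, B h x <= M * K.
Proof.
move=> hB BK h M ch hM x.
have M0 : 0 <= M by case/andP: (hM x) => h0 hm; apply: le_trans hm.
have m1 := posop_mono _ _ _ hB ch (cont_cst M) (fun y => proj2 (andP (hM y))) x.
apply: (le_trans m1).
have Z := posopZ _ M (fun _ : X => 1) hB (cont_cst 1).
have E : (fun _ : X => M) = (fun x => M * 1) by apply/funext => y; rewrite mulr1.
by rewrite E Z /= ler_wpM2l.
Qed.

Lemma lam_le_m {R : realType} {X : topologicalType} (alpha : X -> X)
  (A : (X -> R) -> (X -> R)) (phi : X -> R) (m K : R) :
  compact [set: X] -> transfer_operator alpha A -> continuous phi ->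
  (forall x, phi x <= m) -> (forall x, A (fun _ => 1) x <= K) -> 0 < K ->
  (lam A phi <= (1 + (m + ln K))%:E)%E.
Proof.
move=> cX hA cphi phim AK K0.
have hBp := transfer_posop_phi _ A phi hA cphi.
have K0' : 0 <= expR m * K by rewrite mulr_ge0 ?expR_ge0 ?ltW.
have step := Bphi_step alpha A phi m K hA cphi phim AK.
have bnd := iter_bound _ _ hBp K0' step.
have -> : m + ln K = ln (expR m * K) by rewrite lnM ?posrE ?expR_gt0 // expRK.
apply: (lam_le alpha A phi 1 _ cX hA cphi (lexx _)); first by rewrite mulr_gt0 ?expR_gt0.
move=> n x.
have h1 : forall y : X, 0 <= (fun _ : X => 1 : R) y <= 1.
  by move=> y; rewrite /= ler01 lexx.
by case/andP: (bnd n (fun _ => 1) 1 (cont_cst 1) h1 x).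
Qed.

Lemma lam_psi {R : realType} {X : topologicalType} (alpha : X -> X)
  (A : (X -> R) -> (X -> R)) (f : X -> R) (t K : R) :
  compact [set: X] -> continuous alpha -> transfer_operator alpha A -> continuous f ->
  (forall x, A (fun _ => 1) x <= K) -> 0 < K ->
  (lam A (fun x => (t * f (alpha x) + (- t) * f x)%R) <= (1 + ln K)%:E)%E.
Proof.
move=> cX calpha hA cf AK K0.
set psi := fun x => t * f (alpha x) + (- t) * f x.
have cfa : continuous (fun x => f (alpha x)).
  by move=> x; apply: (@continuous_comp _ _ _ alpha f); [exact: calpha|exact: cf].
have cpsi : continuous psi.
  by apply: cont_lin => //; apply: cont_mul => //; exact: cont_cst.
have [Fb [Fb0 HF]] := compact_bnd _ cX cf.
set G := `|t| * Fb.
have G0 : 0 <= G by rewrite mulr_ge0.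
have hAp := transfer_posop _ _ hA.
have [cAn _ pAn] := hAp.
set h := fun y => expR ((- t) * f y).
have ch : continuous h by apply: cont_exp; apply: cont_mul => //; exact: cont_cst.
have cI n : continuous (iter n A h).
  by case: (posop_iter _ n hAp) => c _ _; apply: c.
have ident n : Aphi_iter A psi n = fun x => expR (t * f x) * iter n A h x.
  elim: n => [|n IH].
    by apply/funext => x /=; rewrite /h mulNr -expRD addrN expR0.
  rewrite /Aphi_iter iterS -/(Aphi_iter A psi n) IH.
  have E : (fun x => expR (psi x) * (expR (t * f x) * iter n A h x)) =
           (fun x => (fun y => expR (t * f y)) (alpha x) * iter n A h x).
    apply/funext => x; rewrite /psi expRD -mulrA; congr (_ * _).
    by rewrite mulrA -expRD mulNr addNr expR0 mul1r.
  rewrite E.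
  case: hA => _ [_ tr].
  rewrite (tr (fun y => expR (t * f y)) (iter n A h)) //.
  by apply: cont_exp; apply: cont_mul => //; exact: cont_cst.
have bndA := iter_bound _ _ hAp (ltW K0) (A_step A K hAp AK).
apply: (lam_le alpha A psi (expR (G + G)) K cX hA cpsi _ K0).
  by rewrite -expR0 ler_expR addr_ge0.
move=> n x; rewrite ident expRD -mulrA.
have tG : t * f x <= G.
  by rewrite (le_trans (ler_norm _)) // normrM ler_wpM2l.
have hM : forall y, 0 <= h y <= expR G.
  move=> y; rewrite /h expR_ge0 ler_expR /=.
  by rewrite (le_trans (ler_norm _)) // normrM normrN ler_wpM2l.
case/andP: (bndA n h (expR G) ch hM x) => i0 i1.
by rewrite ler_pM ?expR_ge0 // ler_expR.
Qed.

Lemma sub_bound {R : realType} (x : \bar R) (B m : R) :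
  (x <= B%:E)%E -> (x - m%:E <= (B - m)%:E)%E.
Proof. by move=> h; rewrite EFinB; apply: leeD. Qed.

Theorem theorem1p10 (R : realType) (X : topologicalType)
  (hX : hausdorff_space X) (cX : compact [set: X])
  (alpha : X -> X) (calpha : continuous alpha)
  (A : (X -> R) -> (X -> R)) (hA : transfer_operator alpha A)
  (mu : (X -> R) -> R) (hmu : lin_functional mu) (hnot : ~ in_M_delta alpha mu) :
  ereal_inf [set (lam A phi - (mu phi)%:E)%E | phi in [set phi : X -> R | continuous phi]]
    = -oo%E.
Proof.
have hAp := transfer_posop _ _ hA.
have [cA _ _] := hAp.
have [K1 [K10 HK1]] := compact_bnd _ cX (cA _ (cont_cst 1)).
set K := K1 + 1.
have K0 : 0 < K by rewrite /K ltr_wpDl.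
have AK : forall x, A (fun _ => 1) x <= K.
  by move=> x; rewrite /K (le_trans (ler_norm _)) // (le_trans (HK1 x)) // lerDl.
have key : forall M : R, exists2 phi, continuous phi & (lam A phi - (mu phi)%:E <= M%:E)%E.
  move=> M.
  case: (pselect (forall f : X -> R, continuous f -> (forall x, 0 <= f x) -> 0 <= mu f)) => [pos|npos].
    case: (pselect (mu (fun _ => 1) = 1)) => [mu1|mu1].
      case: (pselect (forall f : X -> R, continuous f -> mu (fun x => f (alpha x)) = mu f)) => [inv|ninv].
        by exfalso; apply: hnot; split.
      have [f cf nf] : exists2 f : X -> R, continuous f & mu (fun x => f (alpha x)) != mu f.
        case: (pselect (exists2 f : X -> R, continuous f & mu (fun x => f (alpha x)) != mu f)) => // H.
        exfalso; apply: ninv => f cf.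
        have [//|neq] := eqVneq (mu (fun x => f (alpha x))) (mu f).
        by exfalso; apply: H; exists f.
      set d := mu (fun x => f (alpha x)) - mu f.
      have d0 : d != 0 by rewrite /d subr_eq0.
      set t := (1 + ln K - M) / d.
      set psi := fun x => (t * f (alpha x) + (- t) * f x)%R.
      have cfa : continuous (fun x => f (alpha x)).
        by move=> x; apply: (@continuous_comp _ _ _ alpha f); [exact: calpha|exact: cf].
      have cpsi : continuous psi.
        by apply: cont_lin => //; apply: cont_mul => //; exact: cont_cst.
      exists psi => //.
      have mupsi : mu psi = t * d.
        rewrite /psi hmu //; last by apply: cont_mul => //; exact: cont_cst.
        by rewrite (muZ _ _ _ hmu cf) /d; ring.
      apply: (le_trans (sub_bound _ _ _ (lam_psi alpha A f t K cX calpha hA cf AK K0))).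
      by rewrite mupsi lee_fin /t divfK // ; lra.
    have d0 : 1 - mu (fun _ => 1) != 0 by rewrite subr_eq0 eq_sym; apply/eqP.
    set c := (M - (1 + ln K)) / (1 - mu (fun _ => 1)).
    exists (fun _ => c); first exact: cont_cst.
    have muc : mu (fun _ => c) = c * mu (fun _ => 1).
      rewrite -(muZ _ c _ hmu (cont_cst 1)).
      by congr mu; apply/funext => x; rewrite mulr1.
    have lc := lam_le_m alpha A (fun _ => c) c K cX hA (cont_cst c) (fun _ => lexx c) AK K0.
    apply: (le_trans (sub_bound _ _ _ lc)).
    rewrite muc lee_fin.
    have -> : 1 + (c + ln K) - c * mu (fun _ => 1) = 1 + ln K + c * (1 - mu (fun _ => 1)) by ring.
    by rewrite /c divfK // ; lra.
  have [f [cf [f0 muf]]] : exists f : X -> R, continuous f /\ (forall x, 0 <= f x) /\ mu f < 0.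
    case: (pselect (exists f : X -> R, continuous f /\ (forall x, 0 <= f x) /\ mu f < 0)) => // H.
    exfalso; apply: npos => f cf f0; rewrite leNgt; apply/negP => muf.
    by apply: H; exists f.
  set d := mu f.
  set t := `|1 + ln K - M| / (- d).
  have t0 : 0 <= t by rewrite /t divr_ge0 // oppr_ge0 ltW.
  set phi := fun x => (- t) * f x.
  have cphi : continuous phi by apply: cont_mul => //; exact: cont_cst.
  exists phi => //.
  have phi0 : forall x, phi x <= 0.
    by move=> x; rewrite /phi mulNr oppr_le0 mulr_ge0.
  have lp := lam_le_m alpha A phi 0 K cX hA cphi phi0 AK K0.
  apply: (le_trans (sub_bound _ _ _ lp)).
  rewrite /phi (muZ _ _ _ hmu cf) lee_fin -/d.
  have td : - t * d = `|1 + ln K - M|.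
    rewrite /t mulNr -mulrN divfK //.
    by rewrite oppr_eq0 lt_eqF.
  have := ler_norm (1 + ln K - M).
  rewrite -td; lra.
have HM : forall M : R, (ereal_inf [set (lam A phi - (mu phi)%:E)%E | phi in [set phi : X -> R | continuous phi]] <= M%:E)%E.
  move=> M; have [phi cphi le] := key M.
  apply: le_trans le; apply: ereal_inf_lbound; by exists phi.
move: HM; case: (ereal_inf _) => [r| |] H //.
  by have := H (r - 1); rewrite lee_fin => h; exfalso; lra.
by have := H 0.
Qed.
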